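(* Let $\mathbb{K}=(K,+,\times,0,1)$ be a semiring, let $A=(\Sigma,Q,\nu,\delta)$ be a RWTA with weights in $K$, and let $\sim$ be an equivalence relation on $Q$ that is down compatible with $A$. Then $\mathbb{P}_A=\mathbb{P}_{A_\sim}$.
   Context: A graded alphabet is a finite set $\Sigma=\bigcup_{k\in\mathbb{N}}\Sigma_k$; $T_\Sigma$ is the set of trees $f(t_1,\ldots,t_k)$ with $f\in\Sigma_k$. A RWTA with weights in $K$ is $A=(\Sigma,Q,\nu,\delta)$ with $Q$ finite, $\nu:Q\to K$, $\delta\subseteq\bigcup_k Q\times\Sigma_k\times Q^k$. Write $\delta(f,q_1,\ldots,q_k)=\{q\mid(q,f,q_1,\ldots,q_k)\in\delta\}$, extended to subsets by union over tuples; $\nu(S)=\sum_{s\in S}\nu(s)$ ($\nu(\emptyset)=0$); $\Delta(f(t_1,\ldots,t_k))=\delta(f,\Delta(t_1),\ldots,\Delta(t_k))$; $\mathbb{P}_A(t)=\nu(\Delta(t))$. The down language of $q$ is $L_q(A)=\{t\in T_\Sigma\mid q\in\Delta(t)\}$. An equivalence relation $\sim$ on $Q$ is down compatible with $A$ if $q_1\sim q_2$ implies $L_{q_1}(A)=L_{q_2}(A)$. The quotient of $A$ by an equivalence relation $\sim$ on $Q$ is the RWTA $A_\sim=(\Sigma,Q_\sim,\nu',\delta')$, where $Q_\sim$ is the set of equivalence classes, $\nu'(C)=\sum_{q\in C}\nu(q)$, and for classes $C_1,\ldots,C_{k+1}$ and $f\in\Sigma_k$, $C_{k+1}\in\delta'(f,C_1,\ldots,C_k)$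 iff there exist $q_i\in C_i$ ($1\le i\le k+1$) with $q_{k+1}\in\delta(f,q_1,\ldots,q_k)$. *)

(* Defs.v *)
From HB Require Import structures.
From mathcomp Require Import all_boot all_order all_algebra.
Set Implicit Arguments. Unset Strict Implicit. Unset Printing Implicit Defensive.
Import GRing.Theory.
Local Open Scope ring_scope.

(* A raw tree is a node labelled by a symbol with a list of children;
   T_Sigma is the set of raw trees with [wf ar] (each node has exactly
   [ar f] children). *)
Inductive tree (Sigma : Type) : Type := Node of Sigma & seq (tree Sigma).
Arguments Node {Sigma}.

Fixpoint wf (Sigma : Type) (ar : Sigma -> nat) (t : tree Sigma) : bool :=
  match t with Node f ts => (size ts == ar f) && all (wf ar) ts end.

(* An RWTA over Sigma with state set Q (a finType) and weights in K is given by
   nu : Q -> K and the transition relation delta, encoded as a boolean predicate: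
   delta q f [:: q1; ...; qk] holds iff (q, f, q1, ..., qk) is a transition
   (only lists of length ar f are meaningful). *)

Definition deltaS (Sigma : Type) (Q : finType) (delta : Q -> Sigma -> seq Q -> bool)
  (f : Sigma) (Ss : seq {set Q}) : {set Q} :=
  [set q | [exists qs : (size Ss).-tuple Q,
              all2 (fun q' (S : {set Q}) => q' \in S) qs Ss && delta q f qs]].

Fixpoint Delta (Sigma : Type) (Q : finType) (delta : Q -> Sigma -> seq Q -> bool)
  (t : tree Sigma) : {set Q} :=
  match t with Node f ts => deltaS delta f (map (Delta delta) ts) end.

Definition nuS (K : pzSemiRingType) (Q : finType) (nu : Q -> K) (S : {set Q}) : K :=
  \sum_(q in S) nu q.

Definition PA (Sigma : Type) (K : pzSemiRingType) (Q : finType) (nu : Q -> K)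
  (delta : Q -> Sigma -> seq Q -> bool) (t : tree Sigma) : K :=
  nuS nu (Delta delta t).

Definition down_lang (Sigma : Type) (ar : Sigma -> nat) (Q : finType)
  (delta : Q -> Sigma -> seq Q -> bool) (q : Q) : tree Sigma -> Prop :=
  fun t => wf ar t /\ q \in Delta delta t.

Definition down_compatible (Sigma : Type) (ar : Sigma -> nat) (Q : finType)
  (delta : Q -> Sigma -> seq Q -> bool) (e : rel Q) : Prop :=
  forall q1 q2, e q1 q2 -> forall t, down_lang ar delta q1 t <-> down_lang ar delta q2 t.

Definition classes (Q : finType) (e : rel Q) : {set {set Q}} :=
  equivalence_partition e [set: Q].

Definition qstate (Q : finType) (e : rel Q) : finType :=
  {C : {set Q} | C \in classes e}.

Definition qnu (K : pzSemiRingType) (Q : finType) (e : rel Q) (nu : Q -> K)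
  (C : qstate e) : K := \sum_(q in val C) nu q.

Definition qdelta (Sigma : Type) (Q : finType) (e : rel Q)
  (delta : Q -> Sigma -> seq Q -> bool)
  (C : qstate e) (f : Sigma) (Cs : seq (qstate e)) : bool :=
  [exists qs : (size Cs).-tuple Q,
     [exists q in val C,
        all2 (fun q' (C' : qstate e) => q' \in val C') qs Cs && delta q f qs]].

(* Main.v *)
Require Import Defs.
From mathcomp Require Import all_boot all_order all_algebra.
Set Implicit Arguments. Unset Strict Implicit. Unset Printing Implicit Defensive.
Import GRing.Theory.

Lemma tupleex (T S : Type) (r : T -> S -> bool) (P : seq T -> bool) (Ss : seq S) :
  (exists qs : (size Ss).-tuple T, all2 r qs Ss && P qs) <->
  (exists qs : seq T, all2 r qs Ss && P qs).
Proof.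
split=> [[qs H]|[qs /andP[H1 H2]]]; first by exists qs.
have Hs : size qs == size Ss by move: H1; rewrite all2E => /andP[].
by exists (Tuple Hs); rewrite /= H1 H2.
Qed.

Lemma mem_deltaS (Sigma : Type) (Q : finType) (delta : Q -> Sigma -> seq Q -> bool)
  f Ss q : q \in deltaS delta f Ss <->
  exists qs : seq Q, all2 (fun q' (S : {set Q}) => q' \in S) qs Ss && delta q f qs.
Proof.
rewrite inE; split=> [/existsP H|H]; first by apply/tupleex.
by apply/existsP; apply/(tupleex (fun q' (S : {set Q}) => q' \in S) (delta q f)).
Qed.

Lemma qdeltaE (Sigma : Type) (Q : finType) (e : rel Q)
  (delta : Q -> Sigma -> seq Q -> bool) C f Cs :
  qdelta delta C f Cs <-> exists qs : seq Q, exists2 q, q \in val C &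
     all2 (fun q' (C' : qstate e) => q' \in val C') qs Cs && delta q f qs.
Proof.
rewrite /qdelta; split.
  move=> /existsP[qs /existsP[q /andP[Hq H]]]; by exists qs; exists q.
move=> [qs [q Hq /andP[H1 H2]]].
have Hs : size qs == size Cs by move: H1; rewrite all2E => /andP[].
apply/existsP; exists (Tuple Hs); apply/existsP; exists q; by rewrite Hq /= H1 H2.
Qed.

Fixpoint tind (Sigma : Type) (P : tree Sigma -> Prop)
  (H : forall f ts, foldr (fun t acc => P t /\ acc) True ts -> P (Node f ts))
  (t : tree Sigma) : P t :=
  match t with Node f ts => H f ts
    ((fix loop (ts : seq (tree Sigma)) : foldr (fun t acc => P t /\ acc) True ts :=
       match ts with [::] => I | t :: ts' => conj (tind H t) (loop ts') end) ts) end.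

Lemma cls_mem (Q : finType) (e : rel Q) (He : equivalence_rel e) (q : Q) :
  pblock (classes e) q \in classes e.
Proof.
have /and3P[/eqP Hc _ _] := equivalence_partitionP (in3W He) (D := [set: Q]).
by apply: pblock_mem; rewrite /classes Hc inE.
Qed.

Definition cls (Q : finType) (e : rel Q) (He : equivalence_rel e) (q : Q) : qstate e :=
  exist _ (pblock (classes e) q) (cls_mem He q).

Lemma in_cls (Q : finType) (e : rel Q) (He : equivalence_rel e) (q : Q) (C : qstate e) :
  (cls He q == C) = (q \in val C).
Proof.
have /and3P[/eqP Hc Ht _] := equivalence_partitionP (in3W He) (D := [set: Q]).
apply/idP/idP.
  move/eqP=> <- /=; by rewrite mem_pblock /classes Hc inE.
move=> Hq; apply/eqP; apply: val_inj => /=.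
by apply: def_pblock => //; exact: (valP C).
Qed.

Lemma same_cls (Q : finType) (e : rel Q) (He : equivalence_rel e) (C : qstate e) x y :
  x \in val C -> y \in val C -> e x y.
Proof.
move=> Hx Hy.
have /and3P[_ Ht _] := equivalence_partitionP (in3W He) (D := [set: Q]).
have := pblock_equivalence_partition (in3W He) (D := [set: Q]) (x := x) (y := y).
rewrite !inE => /(_ isT isT) <-.
by rewrite (def_pblock Ht (valP C) Hx).
Qed.

Lemma Ustep (Sigma : finType) (ar : Sigma -> nat) (Q : finType)
  (delta : Q -> Sigma -> seq Q -> bool) (e : rel Q) :
  down_compatible ar delta e -> forall t q q', wf ar t -> e q q' ->
  q \in Delta delta t -> q' \in Delta delta t.
Proof.
move=> Hd t q q' Hw Hqq' Hq.
by have [/(_ (conj Hw Hq)) [] _ ->] := Hd q q' Hqq' t.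
Qed.

Lemma all2_cls (Q : finType) (e : rel Q) (He : equivalence_rel e) (qs : seq Q) :
  all2 (fun q' (C' : qstate e) => q' \in val C') qs (map (cls He) qs).
Proof. elim: qs => //= q qs ->; rewrite andbT; by have := in_cls He q (cls He q); rewrite eqxx. Qed.

Lemma key (Sigma : finType) (ar : Sigma -> nat) (Q : finType)
  (delta : Q -> Sigma -> seq Q -> bool) (e : rel Q) (He : equivalence_rel e) :
  down_compatible ar delta e -> forall t, wf ar t -> forall C : qstate e,
  (C \in Delta (@qdelta Sigma Q e delta) t) <-> exists2 q, q \in val C & q \in Delta delta t.
Proof.
move=> Hd; elim/tind => f ts IH /= /andP[_ Hw] C.
have Ha : forall Cs qs,
    all2 (fun C' (S : {set qstate e}) => C' \in S) Cs (map (Delta (@qdelta Sigma Q e delta)) ts) ->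
    all2 (fun q' (C' : qstate e) => q' \in val C') qs Cs ->
    all2 (fun q' (S : {set Q}) => q' \in S) qs (map (Delta delta) ts).
  elim: ts IH Hw {C} => [|t ts IHl]; first by move=> _ _ [|? ?] [|? ?].
  move=> [IHt IHs] /andP[Hwt Hws] [|C' Cs] [|q qs] //=.
  move=> /andP[H1 H2] /andP[H3 H4]; rewrite (IHl IHs Hws Cs qs H2 H4) andbT.
  have [q0 Hq0 Hq0t] := (IHt Hwt C').1 H1.
  exact: Ustep Hd t q0 q Hwt (same_cls He Hq0 H3) Hq0t.
have Hb : forall qs,
    all2 (fun q' (S : {set Q}) => q' \in S) qs (map (Delta delta) ts) ->
    all2 (fun C' (S : {set qstate e}) => C' \in S) (map (cls He) qs)
       (map (Delta (@qdelta Sigma Q e delta)) ts).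
  elim: ts IH Hw {C Ha} => [|t ts IHl]; first by move=> _ _ [|? ?].
  move=> [IHt IHs] /andP[Hwt Hws] [|q qs] //=.
  move=> /andP[H1 H2]; rewrite (IHl IHs Hws qs H2) andbT.
  apply/(IHt Hwt); exists q => //; by rewrite -(in_cls He) eqxx.
split.
  move=> /mem_deltaS [Cs /andP[H1 /qdeltaE [qs [q Hq /andP[H2 H3]]]]].
  exists q => //; apply/mem_deltaS; exists qs; by rewrite (Ha Cs qs H1 H2) H3.
move=> [q Hq /mem_deltaS [qs /andP[H1 H2]]].
apply/mem_deltaS; exists (map (cls He) qs); rewrite Hb //=.
apply/qdeltaE; exists qs; exists q => //; by rewrite all2_cls H2.
Qed.

Theorem proposition6 (K : pzSemiRingType) (Sigma : finType) (ar : Sigma -> nat)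
  (Q : finType) (nu : Q -> K) (delta : Q -> Sigma -> seq Q -> bool) (e : rel Q) :
  equivalence_rel e ->
  down_compatible ar delta e ->
  forall t : tree Sigma, wf ar t ->
    PA nu delta t = PA (@qnu K Q e nu) (@qdelta Sigma Q e delta) t.
Proof.
move=> He Hd t Hw; rewrite /PA /nuS /qnu.
rewrite (partition_big (cls He) (fun C => C \in Delta (@qdelta Sigma Q e delta) t)).
  apply: eq_bigr => C /(key He Hd Hw) [q0 Hq0 Hq0t].
  apply: eq_bigl => q; rewrite in_cls.
  case Hq: (q \in val C); rewrite ?andbF ?andbT //.
  exact: Ustep Hd t q0 q Hw (same_cls He Hq0 Hq) Hq0t.
move=> q Hq; apply/(key He Hd Hw); exists q => //.
by have := in_cls He q (cls He q); rewrite eqxx.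
Qed.
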